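(* Let $\mathcal D=\{d_1,\dots,d_s\}$ and $\mathcal H=\{h_1,\dots,h_n\}$ be finite sets, each $h_i$ a probability distribution $\mathbb P[\cdot\mid h_i]$ on $\mathcal D$, and let $\bm p=(p_1,\dots,p_n)$ be a prior on $\mathcal H$ with all $p_i>0$. Let $m_1,m_2,\dots$ be positive integers and for each $t\ge1$ let $P^{|t}$ be the $n\times n$ matrix $$P^{|t}_{ij}=\sum_{\mathbf d\in\mathcal D^{m_t}}\frac{\mathbb P[\mathbf d\mid h_i]\,\mathbb P[\mathbf d\mid h_j]\,p_j}{\sum_{k=1}^n\mathbb P[\mathbf d\mid h_k]\,p_k},$$ where $\mathbb P[(x_1,\dots,x_m)\mid h]=\prod_{k=1}^m\mathbb P[x_k\mid h]$. Let $P^{\le t}=P^{|1}P^{|2}\cdots P^{|t}$ and ${\tt d}_1=\min_{j\ne1}d_{RS}(\mathbb P[\cdot\mid h_1],\mathbb P[\cdot\mid h_j])$. Then for every $t\ge1$, $$\sum_{j=2}^nP^{\le t}_{1j}\le\frac12\sqrt{\frac{n(1-p_1)}{p_1}}\sum_{s=1}^te^{-\frac12{\tt d}_1^2m_s}.$$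
   Context: Root-sine distance: for probability vectors $\bm a,\bm b$ on $\mathcal D$, $d_{RS}(\bm a,\bm b)=\sqrt{1-\bigl(\sum_{i=1}^s\sqrt{a_ib_i}\bigr)^2}$. *)

(* Defs.v *)
From mathcomp Require Import all_boot all_order all_algebra.
From mathcomp Require Import reals sequences exp.
Set Implicit Arguments. Unset Strict Implicit. Unset Printing Implicit Defensive.
Import Order.TTheory GRing.Theory Num.Theory.
Local Open Scope ring_scope.

(* Hypotheses h_1,...,h_{n+1} indexed by 'I_n.+1 (h_1 = ord0);
   data space D = 'I_s;  Pl h x = P[x | h]. *)

Definition dRS (R : realType) (s : nat) (a b : 'I_s -> R) : R :=
  Num.sqrt (1 - (\sum_(i < s) Num.sqrt (a i * b i)) ^+ 2).

Definition seq_lik (R : realType) (N s m : nat) (Pl : 'I_N -> 'I_s -> R)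
    (h : 'I_N) (d : m.-tuple 'I_s) : R :=
  \prod_(k < m) Pl h (tnth d k).

Definition Pround (R : realType) (N s : nat) (Pl : 'I_N -> 'I_s -> R)
    (p : 'I_N -> R) (m : nat) : 'M[R]_N :=
  \matrix_(i, j) \sum_(d : m.-tuple 'I_s)
     (seq_lik Pl i d * seq_lik Pl j d * p j /
      \sum_(k < N) seq_lik Pl k d * p k).

Definition Pupto (R : realType) (n s : nat) (Pl : 'I_n.+1 -> 'I_s -> R)
    (p : 'I_n.+1 -> R) (m : nat -> nat) (t : nat) : 'M[R]_n.+1 :=
  \prod_(1 <= k < t.+1) Pround Pl p (m k).

(* d_1 = min_{j <> 1} d_RS(P[.|h_1], P[.|h_j]); the empty min (single
   hypothesis) is taken to be 1, the maximal value of d_RS. *)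
Definition dmin1 (R : realType) (n s : nat) (Pl : 'I_n.+1 -> 'I_s -> R) : R :=
  \big[Order.min/1]_(j < n.+1 | j != ord0) dRS (Pl ord0) (Pl j).

(* Main.v *)
Require Import Defs.
From mathcomp Require Import all_boot all_order all_algebra.
From mathcomp Require Import reals sequences exp.
From mathcomp Require Import ring lra.
Import Order.TTheory GRing.Theory Num.Theory.
Set Implicit Arguments. Unset Strict Implicit.
Local Open Scope ring_scope.

Definition stoch (R : realType) N (M : 'M[R]_N) :=
  (forall i j, 0 <= M i j) /\ (forall i, \sum_j M i j = 1).

Lemma stoch_le1 (R : realType) N (M : 'M[R]_N) i j : stoch M -> M i j <= 1.
Proof.
move=> [H0 H1]; rewrite -(H1 i) (bigD1 j) //= lerDl.
by apply: sumr_ge0 => k _.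
Qed.

Lemma stoch_mul (R : realType) N (M M' : 'M[R]_N) :
  stoch M -> stoch M' -> stoch (M *m M').
Proof.
move=> [H0 H1] [H0' H1']; split.
  by move=> i j; rewrite mxE; apply: sumr_ge0 => k _; apply: mulr_ge0.
move=> i; under eq_bigr do rewrite mxE.
rewrite exchange_big /= -(H1 i); apply: eq_bigr => k _.
by rewrite -big_distrr /= H1' mulr1.
Qed.

Lemma stoch_1 (R : realType) N : stoch (1%:M : 'M[R]_N).
Proof.
split; first by move=> i j; rewrite mxE ler0n.
move=> i; rewrite (bigD1 i) //= big1 ?addr0; first by rewrite mxE eqxx.
by move=> j; rewrite mxE eq_sym => /negbTE ->.
Qed.

Lemma stoch_diag (R : realType) N (M M' : 'M[R]_N) i :
  stoch M -> stoch M' -> 1 - (M *m M') i i <= (1 - M i i) + (1 - M' i i).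
Proof.
move=> HM HM'; have [H0 _] := HM; have [H0' _] := HM'.
have h1 := stoch_le1 i i HM; have h2 := stoch_le1 i i HM'.
have h3 : M i i * M' i i <= (M *m M') i i.
  rewrite mxE (bigD1 i) //= lerDl; apply: sumr_ge0 => k _; exact: mulr_ge0.
have := H0 i i; have := H0' i i; nra.
Qed.
Lemma tuple_sum_prod (R : realType) (s m : nat) (F : 'I_s -> R) :
  \sum_(d : m.-tuple 'I_s) \prod_(k < m) F (tnth d k) = (\sum_(x < s) F x) ^+ m.
Proof.
have -> : (\sum_(x < s) F x) ^+ m = \prod_(k < m) \sum_(x < s) F x.
  by rewrite prodr_const card_ord.
rewrite (bigA_distr_bigA (fun (_ : 'I_m) x => F x)) /=.
rewrite (reindex (fun d : m.-tuple 'I_s => [ffun i => tnth d i])) /=.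
  by apply: eq_bigr => d _; apply: eq_bigr => k _; rewrite ffunE.
exists (fun f : {ffun 'I_m -> 'I_s} => [tuple f i | i < m]) => [d _|f _].
  by apply: eq_from_tnth => i; rewrite tnth_mktuple ffunE.
by apply/ffunP => i; rewrite ffunE tnth_mktuple.
Qed.

Lemma seq_lik_ge0 (R : realType) N s m (Pl : 'I_N -> 'I_s -> R) h (d : m.-tuple 'I_s) :
  (forall i x, 0 <= Pl i x) -> 0 <= seq_lik Pl h d.
Proof. by move=> H; apply: prodr_ge0 => k _. Qed.

Lemma Pround_stoch (R : realType) N s (Pl : 'I_N -> 'I_s -> R) (p : 'I_N -> R) m :
  (forall i x, 0 <= Pl i x) -> (forall i, \sum_(x < s) Pl i x = 1) ->
  (forall i, 0 < p i) -> stoch (Pround Pl p m).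
Proof.
move=> HPl0 HPl1 Hp0.
have Z0 : forall d : m.-tuple 'I_s, 0 <= \sum_(k < N) seq_lik Pl k d * p k.
  by move=> d; apply: sumr_ge0 => k _; apply: mulr_ge0; [exact: seq_lik_ge0|exact: ltW].
split.
  move=> i j; rewrite mxE; apply: sumr_ge0 => d _; apply: divr_ge0 => //.
  apply: mulr_ge0; [apply: mulr_ge0; exact: seq_lik_ge0|exact: ltW].
move=> i; under eq_bigr do rewrite mxE.
rewrite exchange_big /=.
transitivity (\sum_(d : m.-tuple 'I_s) seq_lik Pl i d); last first.
  by rewrite /seq_lik tuple_sum_prod HPl1 expr1n.
apply: eq_bigr => d _.
set Z := \sum_(k < N) seq_lik Pl k d * p k.
have -> : \sum_(j < N) seq_lik Pl i d * seq_lik Pl j d * p j / Z =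
          seq_lik Pl i d * Z / Z.
  rewrite /Z big_distrr big_distrl /=; apply: eq_bigr => j _; by rewrite mulrA.
have [Zz|Znz] := eqVneq Z 0.
  rewrite Zz invr0 mulr0.
  have : seq_lik Pl i d * p i <= Z.
    rewrite /Z (bigD1 i) //= lerDl; apply: sumr_ge0 => k _.
    by apply: mulr_ge0; [exact: seq_lik_ge0|exact: ltW].
  rewrite Zz => h; have h0 := seq_lik_ge0 i d HPl0; have hp := Hp0 i.
  symmetry; apply/eqP; rewrite eq_le h0 andbT.
  by rewrite -(pmulr_lle0 _ hp).
by rewrite mulfK.
Qed.

Lemma key_scalar (R : realType) (a b G p0 pj Z : R) :
  0 <= a -> 0 <= b -> 0 <= G -> G ^+ 2 = a * b -> 0 < p0 -> 0 < pj ->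
  p0 * a + pj * b <= Z ->
  a * b * pj / Z <= Num.sqrt pj / (2 * Num.sqrt p0) * G.
Proof.
move=> ha hb hG hG2 hp0 hpj hZ.
set u := Num.sqrt p0; set v := Num.sqrt pj.
have hu : 0 < u by rewrite sqrtr_gt0.
have hv : 0 < v by rewrite sqrtr_gt0.
have hp0e : p0 = u ^+ 2 by rewrite sqr_sqrtr // ltW.
have hpje : pj = v ^+ 2 by rewrite sqr_sqrtr // ltW.
have hX : 0 <= p0 * a + pj * b by apply: addr_ge0; apply: mulr_ge0 => //; apply: ltW.
have h2 : 2 * u * v * G <= p0 * a + pj * b.
  have hsq : (2 * u * v * G) ^+ 2 <= (p0 * a + pj * b) ^+ 2.
    have -> : (2 * u * v * G) ^+ 2 = 4 * p0 * pj * (a * b).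
      by rewrite -hG2 hp0e hpje; ring.
    have : 0 <= (p0 * a - pj * b) ^+ 2 by apply: sqr_ge0.
    nra.
  have hw : 0 <= 2 * u * v * G by rewrite !mulr_ge0 // ltW.
  move: hsq hw hX; set w := 2 * u * v * G; set X := p0 * a + pj * b; nra.
have hZ0 : 0 <= Z by apply: le_trans hZ.
have [->|Znz] := eqVneq Z 0.
  rewrite invr0 mulr0; apply: mulr_ge0 => //; apply: divr_ge0; first exact: ltW.
  by apply: mulr_ge0 => //; apply: ltW.
have Zp : 0 < Z by rewrite lt0r Znz.
rewrite ler_pdivrMr //.
have -> : a * b * pj = v / (2 * u) * G * (2 * u * v * G).
  rewrite mulrA -hG2 hpje; field; by rewrite gt_eqF.
apply: ler_wpM2l; last exact: le_trans hZ.
apply: mulr_ge0 => //; apply: divr_ge0; [exact: ltW|].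
by apply: mulr_ge0 => //; apply: ltW.
Qed.

Lemma sqrt_am_gm (R : realType) (a b : R) : 0 <= a -> 0 <= b ->
  Num.sqrt (a * b) <= (a + b) / 2.
Proof.
move=> ha hb.
have hs := sqrtr_ge0 (a * b).
have hs2 : Num.sqrt (a * b) ^+ 2 = a * b by rewrite sqr_sqrtr // mulr_ge0.
have : 0 <= (a - b) ^+ 2 by apply: sqr_ge0.
move: hs hs2; set q := Num.sqrt (a * b) => hs hs2 hab.
have hq : q ^+ 2 <= ((a + b) / 2) ^+ 2 by rewrite hs2; nra.
have hab0 : 0 <= (a + b) / 2 by apply: divr_ge0 => //; apply: addr_ge0.
nra.
Qed.

Lemma BC_le1 (R : realType) s (a b : 'I_s -> R) :
  (forall x, 0 <= a x) -> (forall x, 0 <= b x) ->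
  \sum_(x < s) a x = 1 -> \sum_(x < s) b x = 1 ->
  \sum_(x < s) Num.sqrt (a x * b x) <= 1.
Proof.
move=> ha hb sa sb.
apply: (@le_trans _ _ (\sum_(x < s) (a x + b x) / 2)).
  by apply: ler_sum => x _; apply: sqrt_am_gm.
by rewrite -big_distrl /= big_split /= sa sb; lra.
Qed.

Lemma dmin1_ge0 (R : realType) n s (Pl : 'I_n.+1 -> 'I_s -> R) : 0 <= dmin1 Pl.
Proof.
rewrite /dmin1; apply: (big_ind (fun x => 0 <= x)) => //.
  by move=> x y hx hy; rewrite le_min hx hy.
by move=> i _; apply: sqrtr_ge0.
Qed.

Lemma dmin1_le (R : realType) n s (Pl : 'I_n.+1 -> 'I_s -> R) j :
  j != ord0 -> dmin1 Pl <= dRS (Pl ord0) (Pl j).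
Proof. by move=> hj; rewrite /dmin1 (bigD1 j) //= ge_min lexx. Qed.

Lemma BC_exp (R : realType) n s (Pl : 'I_n.+1 -> 'I_s -> R) j :
  (forall i x, 0 <= Pl i x) -> (forall i, \sum_(x < s) Pl i x = 1) ->
  j != ord0 ->
  \sum_(x < s) Num.sqrt (Pl ord0 x * Pl j x) <= expR (- (2^-1 * dmin1 Pl ^+ 2)).
Proof.
move=> HPl0 HPl1 hj.
set BC := \sum_(x < s) _.
have hB0 : 0 <= BC by apply: sumr_ge0 => x _; apply: sqrtr_ge0.
have hB1 : BC <= 1 by apply: BC_le1.
have hd0 := dmin1_ge0 Pl.
have hd := dmin1_le Pl hj.
have hrs : dRS (Pl ord0) (Pl j) ^+ 2 = 1 - BC ^+ 2.
  by rewrite /dRS -/BC sqr_sqrtr // subr_ge0; nra.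
have hE : expR (- (2^-1 * dmin1 Pl ^+ 2)) ^+ 2 = expR (- dmin1 Pl ^+ 2).
  by rewrite -expRM_natl; congr expR; rewrite mulrN mulrA mulfV ?mul1r // pnatr_eq0.
have hx := expR_ge1Dx (- dmin1 Pl ^+ 2).
have hsq : BC ^+ 2 <= expR (- (2^-1 * dmin1 Pl ^+ 2)) ^+ 2.
  rewrite hE; apply: le_trans hx.
  have : dmin1 Pl ^+ 2 <= dRS (Pl ord0) (Pl j) ^+ 2.
    by rewrite lerXn2r // nnegrE // (le_trans hd0 hd).
  rewrite hrs; lra.
have := expR_ge0 (- (2^-1 * dmin1 Pl ^+ 2)).
move: hsq; set e := expR _; nra.
Qed.

Lemma round_off (R : realType) n s (Pl : 'I_n.+1 -> 'I_s -> R) (p : 'I_n.+1 -> R) m j :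
  (forall i x, 0 <= Pl i x) -> (forall i, \sum_(x < s) Pl i x = 1) ->
  (forall i, 0 < p i) -> j != ord0 ->
  Pround Pl p m ord0 j <=
  Num.sqrt (p j) / (2 * Num.sqrt (p ord0)) * expR (- (2^-1 * dmin1 Pl ^+ 2 * m%:R)).
Proof.
move=> HPl0 HPl1 Hp0 hj.
set BC := \sum_(x < s) Num.sqrt (Pl ord0 x * Pl j x).
have hc : 0 <= Num.sqrt (p j) / (2 * Num.sqrt (p ord0)).
  by apply: divr_ge0; [apply: sqrtr_ge0| apply: mulr_ge0 => //; apply: sqrtr_ge0].
apply: (@le_trans _ _ (Num.sqrt (p j) / (2 * Num.sqrt (p ord0)) * BC ^+ m)).
  rewrite mxE /BC -(tuple_sum_prod m (fun x => Num.sqrt (Pl ord0 x * Pl j x))).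
  rewrite big_distrr /=; apply: ler_sum => d _.
  apply: key_scalar.
  - exact: seq_lik_ge0.
  - exact: seq_lik_ge0.
  - by apply: prodr_ge0 => k _; apply: sqrtr_ge0.
  - rewrite -prodrXl /seq_lik -big_split /=; apply: eq_bigr => k _.
    by rewrite sqr_sqrtr // mulr_ge0.
  - exact: Hp0.
  - exact: Hp0.
  - rewrite (bigD1 ord0) //= (bigD1 j) //= addrA [seq_lik Pl ord0 d * _]mulrC
        [seq_lik Pl j d * _]mulrC lerDl.
    by apply: sumr_ge0 => k _; apply: mulr_ge0; [exact: seq_lik_ge0|exact: ltW].
apply: ler_wpM2l => //.
have -> : - (2^-1 * dmin1 Pl ^+ 2 * m%:R) = m%:R * (- (2^-1 * dmin1 Pl ^+ 2)).
  by ring.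
rewrite expRM_natl; apply: lerXn2r; rewrite ?nnegrE.
- by apply: sumr_ge0 => x _; apply: sqrtr_ge0.
- exact: expR_ge0.
- exact: BC_exp.
Qed.

Lemma sum_sqrt_bound (R : realType) n (p : 'I_n.+1 -> R) :
  (forall i, 0 < p i) -> \sum_(i < n.+1) p i = 1 ->
  \sum_(j < n.+1 | j != ord0) Num.sqrt (p j) <= Num.sqrt ((n.+1)%:R * (1 - p ord0)).
Proof.
move=> Hp0 Hp1.
have hq : \sum_(j < n.+1 | j != ord0) p j = 1 - p ord0.
  by rewrite -Hp1 [X in _ = X - _](bigD1 ord0) //= addrAC subrr add0r.
have hq0 : 0 <= 1 - p ord0 by rewrite -hq; apply: sumr_ge0 => i _; apply: ltW.
have hconst : forall c : R, 0 <= c -> \sum_(j < n.+1 | j != ord0) c <= (n.+1)%:R * c.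
  move=> c hc; rewrite big_mkcond /=.
  apply: (@le_trans _ _ (\sum_(j < n.+1) c)); last by rewrite sumr_const card_ord mulr_natl.
  by apply: ler_sum => i _; case: ifP.
set S := \sum_(j < n.+1 | j != ord0) Num.sqrt (p j).
have hS : 0 <= S by apply: sumr_ge0 => i _; apply: sqrtr_ge0.
rewrite -(ger0_norm hS) -sqrtr_sqr ler_sqrt; last by apply: mulr_ge0.
rewrite expr2 {1}/S big_distrl /=.
apply: (@le_trans _ _ (\sum_(i < n.+1 | i != ord0) ((n.+1)%:R * p i / 2 + (1 - p ord0) / 2))).
  apply: ler_sum => i hi; rewrite /S big_distrr /=.
  apply: (@le_trans _ _ (\sum_(j < n.+1 | j != ord0) (p i / 2 + p j / 2))).
    apply: ler_sum => j _.
    have := sqrt_am_gm (ltW (Hp0 i)) (ltW (Hp0 j)).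
    by rewrite sqrtrM ?(ltW (Hp0 i)) // => h; apply: le_trans h _; lra.
  rewrite big_split /= -big_distrl /= -[\sum_(j < n.+1 | j != ord0) p j / 2]big_distrl /= hq.
  by rewrite lerD2r; apply: ler_wpM2r; [rewrite invr_ge0 | apply: hconst; apply: ltW].
rewrite big_split /= -big_distrl -big_distrr /= hq.
have := hconst _ (divr_ge0 hq0 (ler0n R 2)).
have hn : 0 <= (n.+1)%:R :> R by apply: ler0n.
nra.
Qed.

Lemma round_diag (R : realType) n s (Pl : 'I_n.+1 -> 'I_s -> R) (p : 'I_n.+1 -> R) m :
  (forall i x, 0 <= Pl i x) -> (forall i, \sum_(x < s) Pl i x = 1) ->
  (forall i, 0 < p i) -> \sum_(i < n.+1) p i = 1 ->
  1 - Pround Pl p m ord0 ord0 <=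
  2^-1 * Num.sqrt ((n.+1)%:R * (1 - p ord0) / p ord0) *
  expR (- (2^-1 * dmin1 Pl ^+ 2 * m%:R)).
Proof.
move=> HPl0 HPl1 Hp0 Hp1.
have [_ Hrow] := Pround_stoch m HPl0 HPl1 Hp0.
have -> : 1 - Pround Pl p m ord0 ord0 = \sum_(j < n.+1 | j != ord0) Pround Pl p m ord0 j.
  by rewrite -(Hrow ord0) (bigD1 ord0) //= addrC addrK.
set E := expR _.
set sp0 := Num.sqrt (p ord0).
have hsp0 : 0 < sp0 by rewrite sqrtr_gt0.
have hE : 0 <= E by apply: expR_ge0.
apply: (@le_trans _ _ (\sum_(j < n.+1 | j != ord0) Num.sqrt (p j) * ((2 * sp0)^-1 * E))).
  apply: ler_sum => j hj; rewrite mulrA; exact: round_off.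
rewrite -big_distrl /=.
have hX : 0 <= (n.+1)%:R * (1 - p ord0).
  apply: mulr_ge0 => //.
  rewrite -Hp1 (bigD1 ord0) //= addrAC subrr add0r.
  by apply: sumr_ge0 => i _; apply: ltW.
apply: (@le_trans _ _ (Num.sqrt ((n.+1)%:R * (1 - p ord0)) * ((2 * sp0)^-1 * E))).
  apply: ler_wpM2r; first by apply: mulr_ge0 => //; rewrite invr_ge0 mulr_ge0 // ltW.
  exact: sum_sqrt_bound.
rewrite [Num.sqrt (_ / p ord0)]sqrtrM // sqrtrV ?(ltW (Hp0 ord0)) // -/sp0 invfM.
by rewrite le_eqVlt; apply/orP; left; apply/eqP; ring.
Qed.

Lemma main_ind (R : realType) n s (Pl : 'I_n.+1 -> 'I_s -> R) (p : 'I_n.+1 -> R) m :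
  (forall i x, 0 <= Pl i x) -> (forall i, \sum_(x < s) Pl i x = 1) ->
  (forall i, 0 < p i) -> forall t,
  stoch (Pupto Pl p m t) /\
  1 - Pupto Pl p m t ord0 ord0 <=
    \sum_(1 <= k < t.+1) (1 - Pround Pl p (m k) ord0 ord0).
Proof.
move=> HPl0 HPl1 Hp0; elim=> [|t [IHs IHle]].
  rewrite /Pupto big_geq // big_geq //.
  split; first exact: stoch_1.
  by rewrite mxE eqxx subrr.
rewrite /Pupto big_nat_recr //= -mulmxE.
have HA := Pround_stoch (m t.+1) HPl0 HPl1 Hp0.
split; first exact: stoch_mul.
rewrite big_nat_recr //=.
apply: le_trans (stoch_diag ord0 IHs HA) _.
by rewrite lerD2r.
Qed.

Unset Implicit Arguments.
Set Strict Implicit.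

Theorem lemma1 (R : realType) (n s : nat) (Pl : 'I_n.+1 -> 'I_s -> R)
    (p : 'I_n.+1 -> R) (m : nat -> nat)
    (HPl0 : forall i x, 0 <= Pl i x)
    (HPl1 : forall i, \sum_(x < s) Pl i x = 1)
    (Hp0 : forall i, 0 < p i)
    (Hp1 : \sum_(i < n.+1) p i = 1)
    (Hm : forall t, (1 <= t)%N -> (0 < m t)%N)
    (t : nat) (Ht : (1 <= t)%N) :
  \sum_(j < n.+1 | j != ord0) Pupto Pl p m t ord0 j <=
  2^-1 * Num.sqrt ((n.+1)%:R * (1 - p ord0) / p ord0) *
  \sum_(1 <= k < t.+1) expR (- (2^-1 * dmin1 Pl ^+ 2 * (m k)%:R)).
Proof.
have [[_ Hrow] Hle] := main_ind m HPl0 HPl1 Hp0 t.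
have -> : \sum_(j < n.+1 | j != ord0) Pupto Pl p m t ord0 j = 1 - Pupto Pl p m t ord0 ord0.
  by rewrite -(Hrow ord0) [X in _ = X - _](bigD1 ord0) //= addrAC subrr add0r.
apply: le_trans Hle _.
rewrite big_distrr /=; apply: ler_sum => k _.
exact: round_diag.
Qed.
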